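(* Let $\lambda>1$, $s'\in(0,1]$, $r\in\mathbb{R}$, and consider the system $$x_{n+1}=s'y_n,\qquad y_{n+1}=x_n^{\lambda}e^{r-x_n},\qquad n\ge0,$$ with $(x_0,y_0)\in[0,\infty)^2$; equivalently $x_{n+1}=x_{n-1}^{\lambda}e^{a-x_{n-1}}$ for $n\ge1$ with $x_1=s'y_0$, where $a=r+\ln s'$. Let $f(u)=u^\lambda e^{a-u}$. (a) Every orbit in $[0,\infty)^2$ converges to $(0,0)$ if and only if $a<(\lambda-1)[1-\ln(\lambda-1)]$. (b) Assume $a>(\lambda-1)[1-\ln(\lambda-1)]$, and let $u^*<\bar u$ be the two positive fixed points of $f$. Then the positive fixed points of the scalar equation are $x^*=u^*$ and $\bar x=\bar u$, and every orbit with $(x_0,y_0)\in[0,u^* )\times[0,u^*/s')$ converges to $(0,0)$. (c) Assume $(\lambda-1)[1-\ln(\lambda-1)]<a\le\lambda-(\lambda-1)\ln\lambda$. If $x_0\in[u^*,\bar u]$ or $s'y_0\in[u^*,\bar u]$, then the corresponding orbit does not converge to $(0,0)$. (d) Assume $a>(\lambda-1)[1-\ln(\lambda-1)]$. Then the 2-periodic sequences $\{0,u^*,0,u^*,\dots\}$ and $\{u^*,0,u^*,0,\dots\}$ are solutions of $x_{n+1}=x_{n-1}^{\lambda}e^{a-x_{n-1}}$ and they are unstable: for every $\delta>0$ there are non-negative initial values $(x_0,x_1)$ within distance $\delta$ of $(0,u^* )$ (respectively of $(u^*,0)$) whose solution converges to $0$.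
   Context: For $\lambda>1$ and $a>(\lambda-1)[1-\ln(\lambda-1)]$ the map $f(u)=u^{\lambda}e^{a-u}$ has exactly two positive fixed points $u^*<\lambda-1<\bar u$; $u^*$ is called the Allee fixed point of $f$. *)

(* Defs.v *)
From Stdlib Require Import Reals Lra.
Open Scope R_scope.

(* Real power with the convention 0^p = 0 for p > 0 (Stdlib's Rpower 0 p = 1). *)
Definition rpow (x p : R) : R := if Rle_dec x 0 then 0 else Rpower x p.

Fixpoint orbit (lam s r x0 y0 : R) (n : nat) : R * R :=
  match n with
  | O => (x0, y0)
  | S k => let (x, y) := orbit lam s r x0 y0 k in
           (s * y, rpow x lam * exp (r - x))
  end.

Definition conv_origin (lam s r x0 y0 : R) : Prop :=
  Un_cv (fun n => fst (orbit lam s r x0 y0 n)) 0 /\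
  Un_cv (fun n => snd (orbit lam s r x0 y0 n)) 0.

Definition fA (lam a u : R) : R := rpow u lam * exp (a - u).

Definition scalar_sol (lam a : R) (x : nat -> R) : Prop :=
  forall n : nat, x (S (S n)) = fA lam a (x n).

Definition scalar_fixed (lam a x : R) : Prop := 0 < x /\ scalar_sol lam a (fun _ => x).

(* Main.v *)
Require Import Defs.
From Stdlib Require Import Reals Lra Lia.
Open Scope R_scope.

Lemma fA_pos lam a u : 0 < u -> fA lam a u = exp (lam * ln u + a - u).
Proof. intro H. unfold fA, rpow. destruct (Rle_dec u 0); [lra|].
unfold Rpower. rewrite <- exp_plus. f_equal; ring. Qed.

Lemma fA_0 lam a : fA lam a 0 = 0.
Proof. unfold fA, rpow. destruct (Rle_dec 0 0); [ring|lra]. Qed.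

Lemma fA_nonneg lam a u : 0 <= fA lam a u.
Proof. unfold fA, rpow. destruct (Rle_dec u 0).
- lra.
- unfold Rpower. pose proof (exp_pos (lam * ln u)). pose proof (exp_pos (a-u)). nra. Qed.

Lemma fA_lt lam a u : 0 < u -> (fA lam a u < u <-> (lam-1)*ln u + a - u < 0).
Proof. intro H. rewrite fA_pos by auto. pose proof (exp_ln u H) as E. split; intro H1.
- assert (H2: exp (lam * ln u + a - u) < exp (ln u)) by (rewrite E; exact H1).
  apply exp_lt_inv in H2. lra.
- assert (H2: exp (lam * ln u + a - u) < exp (ln u)) by (apply exp_increasing; lra).
  rewrite E in H2. exact H2. Qed.

Lemma fA_eq lam a u : 0 < u -> (fA lam a u = u <-> (lam-1)*ln u + a - u = 0).
Proof. intro H. rewrite fA_pos by auto. pose proof (exp_ln u H) as E. split; intro H1.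
- assert (H2: exp (lam * ln u + a - u) = exp (ln u)) by (rewrite E; exact H1).
  apply exp_inv in H2. lra.
- assert (H2: exp (lam * ln u + a - u) = exp (ln u)) by (f_equal; lra).
  rewrite E in H2. exact H2. Qed.

Lemma mono_inc k p q : p < q -> exp q <= k -> k*p - exp p < k*q - exp q.
Proof. intros. assert (E: exp p = exp q * exp (p - q)) by (rewrite <- exp_plus; f_equal; ring).
pose proof (exp_ineq1 (p-q) ltac:(lra)). pose proof (exp_pos q). rewrite E. nra. Qed.

Lemma mono_dec k p q : p < q -> k <= exp p -> k*q - exp q < k*p - exp p.
Proof. intros. assert (E: exp q = exp p * exp (q - p)) by (rewrite <- exp_plus; f_equal; ring).
pose proof (exp_ineq1 (q-p) ltac:(lra)). pose proof (exp_pos p). rewrite E. nra. Qed.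

Lemma g_inc k u v : 0 < u -> u < v -> v <= k -> k * ln u - u < k * ln v - v.
Proof. intros. pose proof (mono_inc k (ln u) (ln v) (ln_increasing u v H H0)).
rewrite !exp_ln in H2 by lra. auto. Qed.

Lemma g_dec k u v : k <= u -> 0 < u -> u < v -> k * ln v - v < k * ln u - u.
Proof. intros. pose proof (mono_dec k (ln u) (ln v) (ln_increasing u v H0 H1)).
rewrite !exp_ln in H2 by lra. auto. Qed.

Lemma h_cont lam a L : 0 < L -> continuity_pt (fun u => exp (lam * ln u + a - u)) L.
Proof.
intros H.
assert (Hl : continuity_pt ln L) by (apply derivable_continuous_pt; exact (exist _ (/L) (derivable_pt_lim_ln L H))).
apply (continuity_pt_comp (fun u => lam * ln u + a - u) exp).
- apply continuity_pt_minus. apply continuity_pt_plus. apply continuity_pt_mult. apply continuity_pt_const; intros ??; reflexivity. exact Hl.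
  apply continuity_pt_const; intros ??; reflexivity. apply derivable_continuous_pt, derivable_pt_id.
- apply derivable_continuous_pt, derivable_pt_exp.
Qed.

Lemma cv_shift (v : nat -> R) L : Un_cv v L -> Un_cv (fun n => v (S n)) L.
Proof. intros H eps He. destruct (H eps He) as [N HN]. exists N. intros n Hn. apply HN. lia. Qed.

Lemma iter_conv lam a M (v : nat -> R) :
  (forall u, 0<u<M -> fA lam a u < u) ->
  (forall n, v (S n) = fA lam a (v n)) -> 0 <= v 0%nat < M -> Un_cv v 0.
Proof.
intros Hf Hv H0.
assert (B: forall n, 0 <= v n <= v 0%nat).
{ induction n. lra. rewrite Hv. pose proof (fA_nonneg lam a (v n)).
  destruct (Req_dec (v n) 0) as [E|E]. rewrite E, fA_0. lra.
  assert (fA lam a (v n) < v n) by (apply Hf; lra). lra. }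
assert (D: Un_decreasing v).
{ intro n. rewrite Hv. destruct (Req_dec (v n) 0) as [E|E]. rewrite E, fA_0. lra.
  specialize (B n). assert (fA lam a (v n) < v n) by (apply Hf; lra). lra. }
assert (LB: has_lb v).
{ unfold has_lb, bound, is_upper_bound, EUn, opp_seq. exists 0. intros x [n ->]. specialize (B n). lra. }
destruct (decreasing_cv v D LB) as [L HL].
pose proof (decreasing_ineq v L D HL) as HLe.
assert (L0: 0 <= L).
{ destruct (Rle_or_lt 0 L) as [|Hneg]; auto. destruct (HL (-L) ltac:(lra)) as [N HN].
  specialize (HN N (le_n _)). specialize (B N). unfold R_dist in HN. rewrite Rabs_right in HN; lra. }
destruct (Req_dec L 0) as [E|E]. { rewrite <- E. exact HL. }
exfalso.
assert (Lp: 0 < L) by lra.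
pose proof (continuity_seq _ v L (h_cont lam a L Lp) HL) as C.
assert (C2: Un_cv (fun n => v (S n)) (exp (lam * ln L + a - L))).
{ intros eps He. destruct (C eps He) as [N HN]. exists N. intros n Hn.
  rewrite Hv, fA_pos by (specialize (HLe n); lra). apply HN; auto. }
pose proof (UL_sequence _ _ _ C2 (cv_shift v L HL)) as U.
rewrite <- fA_pos in U by lra.
assert (fA lam a L < L) by (apply Hf; split; [lra| specialize (HLe 0%nat); lra]). lra.
Qed.

Lemma cv_even_odd (x : nat -> R) : Un_cv (fun n => x (2*n)%nat) 0 -> Un_cv (fun n => x (S (2*n))) 0 -> Un_cv x 0.
Proof. intros He Ho eps Heps. destruct (He eps Heps) as [N1 H1]; destruct (Ho eps Heps) as [N2 H2].
exists (2*(N1+N2))%nat. intros n Hn. destruct (Nat.Even_or_Odd n) as [[k ->]|[k ->]].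
- apply H1. lia.
- replace (2*k+1)%nat with (S (2*k)) by lia. apply H2. lia. Qed.

Lemma scalar_conv lam a M (x : nat -> R) : (forall u, 0<u<M -> fA lam a u < u) ->
  (forall n, x (S (S n)) = fA lam a (x n)) -> 0 <= x 0%nat < M -> 0 <= x 1%nat < M -> Un_cv x 0.
Proof. intros Hf Hx H0 H1. apply cv_even_odd.
- apply (iter_conv lam a M); auto. intro n. replace (2 * S n)%nat with (S (S (2*n))) by lia. apply Hx.
- apply (iter_conv lam a M); auto. intro n. replace (S (2 * S n))%nat with (S (S (S (2*n)))) by lia. apply Hx.
Qed.

Lemma orbit_step1 lam s r x0 y0 n : fst (orbit lam s r x0 y0 (S n)) = s * snd (orbit lam s r x0 y0 n).
Proof. simpl. destruct (orbit lam s r x0 y0 n). reflexivity. Qed.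

Lemma orbit_step2 lam s r x0 y0 n : 0 < s ->
  fst (orbit lam s r x0 y0 (S (S n))) = fA lam (r + ln s) (fst (orbit lam s r x0 y0 n)).
Proof. intro Hs. simpl. destruct (orbit lam s r x0 y0 n) as [x y]. simpl. unfold fA.
replace (r + ln s - x) with ((r - x) + ln s) by ring. rewrite exp_plus, exp_ln by lra. ring. Qed.

Lemma orbit_conv lam s r x0 y0 M : 0 < s -> (forall u, 0<u<M -> fA lam (r+ln s) u < u) ->
  0<=x0<M -> 0 <= s*y0 < M -> conv_origin lam s r x0 y0.
Proof. intros Hs Hf H0 H1.
assert (X: Un_cv (fun n => fst (orbit lam s r x0 y0 n)) 0).
{ apply (scalar_conv lam (r + ln s) M); auto. intro n. apply orbit_step2; auto. }
split; auto.
pose proof (cv_shift _ _ X) as X1.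
intros eps He. destruct (X1 (eps * s) ltac:(nra)) as [N HN]. exists N. intros n Hn.
specialize (HN n Hn). cbv beta in HN. rewrite orbit_step1 in HN. unfold R_dist in *.
rewrite Rminus_0_r in *. rewrite Rabs_mult, (Rabs_right s) in HN by lra. nra.
Qed.

Lemma fixed_exists lam a : 1 < lam -> (lam - 1) * (1 - ln (lam - 1)) <= a ->
  exists u, 0 < u /\ fA lam a u = u.
Proof. intros Hl Ha.
set (h := fun t => exp t - (lam-1)*t - a).
assert (Hc: continuity h) by (unfold h; reg).
set (t0 := ln (lam - 1)).
assert (E0: exp t0 = lam - 1) by (apply exp_ln; lra).
assert (H0: h t0 <= 0) by (unfold h; rewrite E0; unfold t0; nra).
set (T := 4*(lam + Rabs a) + 1 + Rabs t0).
assert (HT: 0 < h T).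
{ unfold h. assert (E: exp T = exp (T/2) * exp (T/2)) by (rewrite <- exp_plus; f_equal; field).
  pose proof (exp_ineq1_le (T/2)). pose proof (Rabs_pos a). pose proof (Rabs_pos t0).
  pose proof (Rle_abs a). assert (1 <= T) by (unfold T; lra).
  assert (4*(lam + Rabs a) <= T) by (unfold T; lra).
  assert ((1 + T/2) * (1+T/2) <= exp T) by (rewrite E; apply Rmult_le_compat; lra).
  nra. }
assert (Hz: exists z, h z = 0).
{ destruct (Req_dec (h t0) 0) as [Z|Z]. exists t0; auto.
  assert (t0 < T) by (pose proof (Rle_abs t0); pose proof (Rabs_pos a); unfold T; lra).
  destruct (IVT h t0 T Hc H ltac:(lra) HT) as [z [_ Hz]]. exists z; auto. }
destruct Hz as [z Hz]. exists (exp z). split. apply exp_pos.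
rewrite fA_pos by apply exp_pos. rewrite ln_exp. f_equal. unfold h in Hz. lra.
Qed.

Fixpoint solp (f : R -> R) (x0 x1 : R) (n : nat) : R*R :=
  match n with O => (x0,x1) | S k => let p := solp f x0 x1 k in (snd p, f (fst p)) end.

Lemma solp_step f x0 x1 n : fst (solp f x0 x1 (S (S n))) = f (fst (solp f x0 x1 n)).
Proof. reflexivity. Qed.

Lemma sqrt_sq_lt e d : 0 <= e -> e < d -> sqrt (e*e) < d.
Proof. intros. rewrite sqrt_square; lra. Qed.

Theorem mainTheorem6 (lam s r : R) (Hlam : 1 < lam) (Hs0 : 0 < s) (Hs1 : s <= 1) :
  let a := r + ln s in
  let c := (lam - 1) * (1 - ln (lam - 1)) in
  (* (a) *)
  ((forall x0 y0 : R, 0 <= x0 -> 0 <= y0 -> conv_origin lam s r x0 y0) <-> a < c) /\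
  (forall us ub : R, c < a -> 0 < us -> us < ub ->
     fA lam a us = us -> fA lam a ub = ub ->
     (* (b) *)
     ((forall x : R, scalar_fixed lam a x <-> (x = us \/ x = ub)) /\
      (forall x0 y0 : R, 0 <= x0 < us -> 0 <= y0 < us / s -> conv_origin lam s r x0 y0)) /\
     (* (c) *)
     (a <= lam - (lam - 1) * ln lam ->
      forall x0 y0 : R, 0 <= x0 -> 0 <= y0 ->
        (us <= x0 <= ub \/ us <= s * y0 <= ub) -> ~ conv_origin lam s r x0 y0) /\
     (* (d) *)
     (scalar_sol lam a (fun n => if Nat.even n then 0 else us) /\
      scalar_sol lam a (fun n => if Nat.even n then us else 0) /\
      (forall delta : R, 0 < delta ->
         exists x0 x1 : R, 0 <= x0 /\ 0 <= x1 /\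
           sqrt ((x0 - 0) ^ 2 + (x1 - us) ^ 2) < delta /\
           exists x : nat -> R, scalar_sol lam a x /\ x 0%nat = x0 /\ x 1%nat = x1 /\
             Un_cv x 0) /\
      (forall delta : R, 0 < delta ->
         exists x0 x1 : R, 0 <= x0 /\ 0 <= x1 /\
           sqrt ((x0 - us) ^ 2 + (x1 - 0) ^ 2) < delta /\
           exists x : nat -> R, scalar_sol lam a x /\ x 0%nat = x0 /\ x 1%nat = x1 /\
             Un_cv x 0))).
Proof.
intros a c.
assert (Xnot: forall x0 y0 n0 v, 0 < v -> (forall k, v <= fst (orbit lam s r x0 y0 (n0 + 2*k)%nat)) ->
   ~ conv_origin lam s r x0 y0).
{ intros x0 y0 n0 v Hv Hk [C _]. destruct (C v Hv) as [N HN].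
  specialize (HN (n0 + 2*N)%nat ltac:(lia)). specialize (Hk N). unfold R_dist in HN.
  rewrite Rminus_0_r in HN. rewrite Rabs_right in HN by lra. lra. }
assert (Step: forall x0 y0 k n0, fst (orbit lam s r x0 y0 (n0 + 2 * S k)%nat) =
   fA lam a (fst (orbit lam s r x0 y0 (n0 + 2*k)%nat))).
{ intros. replace (n0 + 2 * S k)%nat with (S (S (n0 + 2*k))) by lia. apply orbit_step2; auto. }

assert (Gu: forall u, 0 < u -> (lam-1)*ln u + a - u <= (lam-1)*ln (lam-1) + a - (lam-1)).
{ intros u Hu. destruct (Rtotal_order u (lam-1)) as [L|[L|L]].
  - pose proof (g_inc (lam-1) u (lam-1) Hu L ltac:(lra)). lra.
  - subst u. lra.
  - pose proof (g_dec (lam-1) (lam-1) u ltac:(lra) ltac:(lra) L). lra. }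
split.
{ split.
  - intro H. destruct (Rlt_dec a c) as [|Hn]; auto. exfalso.
    destruct (fixed_exists lam a Hlam ltac:(unfold c in Hn; lra)) as [u [Hu Fu]].
    apply (Xnot u 0 0%nat u Hu); [|apply H; lra].
    assert (E: forall k, fst (orbit lam s r u 0 (0 + 2*k)%nat) = u).
    { intro k. induction k. reflexivity. rewrite Step, IHk. exact Fu. }
    intro k. rewrite E. lra.
  - intros Hac x0 y0 Hx Hy. apply (orbit_conv lam s r x0 y0 (x0 + s*y0 + 1)); auto.
    + intros u Hu. apply fA_lt. lra. pose proof (Gu u ltac:(lra)). unfold c in Hac. assert ((lam-1)*(1-ln(lam-1)) = (lam-1) - (lam-1)*ln(lam-1)) by ring. unfold a in *. lra.
    + nra.
    + nra. }
intros us ub Hca Hus Hub Fus Fub.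
pose proof (proj1 (fA_eq lam a us Hus) Fus) as Gus.
pose proof (proj1 (fA_eq lam a ub ltac:(lra)) Fub) as Gub.
assert (us_lt: us < lam - 1).
{ destruct (Rlt_le_dec us (lam-1)) as [|L]; auto.
  pose proof (g_dec (lam-1) us ub L Hus Hub). lra. }
assert (ub_gt: lam - 1 < ub).
{ destruct (Rlt_le_dec (lam-1) ub) as [|L]; auto.
  pose proof (g_inc (lam-1) us ub Hus Hub L). lra. }
assert (Below: forall u, 0 < u < us -> fA lam a u < u).
{ intros u Hu. apply fA_lt. lra. pose proof (g_inc (lam-1) u us ltac:(lra) ltac:(lra) ltac:(lra)). lra. }
split; [split|split].
- intro x. split.
  + intros [Hx Sx]. specialize (Sx 0%nat). simpl in Sx.
    pose proof (proj1 (fA_eq lam a x Hx) (eq_sym Sx)) as Gx.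
    destruct (Rle_or_lt x (lam-1)) as [L|L].
    * left. destruct (Rtotal_order x us) as [M|[M|M]]; auto.
      -- pose proof (g_inc (lam-1) x us Hx M ltac:(lra)). lra.
      -- pose proof (g_inc (lam-1) us x Hus M L). lra.
    * right. destruct (Rtotal_order x ub) as [M|[M|M]]; auto.
      -- pose proof (g_dec (lam-1) x ub ltac:(lra) Hx M). lra.
      -- pose proof (g_dec (lam-1) ub x ltac:(lra) ltac:(lra) M). lra.
  + intros [->| ->]; split; auto; try lra; intro n; simpl; auto.
- intros x0 y0 Hx Hy. apply (orbit_conv lam s r x0 y0 us); auto.
  assert (s * y0 < s * (us / s)) by (apply Rmult_lt_compat_l; lra).
  replace (s * (us/s)) with us in H by (field; lra). nra.
- intros Ha x0 y0 Hx Hy Hor.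
  assert (ub_le: ub <= lam).
  { destruct (Rle_or_lt ub lam) as [|L]; auto.
    pose proof (g_dec (lam-1) lam ub ltac:(lra) ltac:(lra) L). lra. }
  assert (Mono: forall u v, 0 < u -> u <= v -> v <= lam -> fA lam a u <= fA lam a v).
  { intros u v Hu Huv Hv. rewrite !fA_pos by lra. destruct (Req_dec u v) as [->|N]. lra.
    pose proof (g_inc lam u v Hu ltac:(lra) Hv). left. apply exp_increasing. lra. }
  assert (Inv: forall u, us <= u <= ub -> us <= fA lam a u <= ub).
  { intros u Hu. split.
    - rewrite <- Fus at 1. apply Mono; lra.
    - rewrite <- Fub. apply Mono; lra. }
  destruct Hor as [Hor|Hor].
  + apply (Xnot x0 y0 0%nat us Hus).
    assert (E: forall k, us <= fst (orbit lam s r x0 y0 (0 + 2*k)%nat) <= ub).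
    { intro k. induction k. simpl. lra. rewrite Step. apply Inv; auto. }
    intro k. apply E.
  + apply (Xnot x0 y0 1%nat us Hus).
    assert (E: forall k, us <= fst (orbit lam s r x0 y0 (1 + 2*k)%nat) <= ub).
    { intro k. induction k. replace (1 + 2*0)%nat with 1%nat by lia. rewrite orbit_step1. simpl. lra.
      rewrite Step. apply Inv; auto. }
    intro k. apply E.
- split; [|split; [|split]].
  + intro n. simpl. destruct (Nat.even n). rewrite fA_0; auto. auto.
  + intro n. simpl. destruct (Nat.even n). auto. rewrite fA_0; auto.
  + intros delta Hd. set (e := Rmin delta us / 2).
    assert (He: 0 < e /\ e < delta /\ e < us).
    { unfold e. pose proof (Rmin_l delta us). pose proof (Rmin_r delta us).
      pose proof (Rmin_pos delta us Hd Hus). lra. }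
    exists 0, (us - e). split; [lra|split; [lra|split]].
    { replace ((0 - 0) ^ 2 + (us - e - us) ^ 2) with (e*e) by ring. apply sqrt_sq_lt; lra. }
    exists (fun n => fst (solp (fA lam a) 0 (us - e) n)). split; [|split; [|split]].
    * intro n. apply solp_step.
    * reflexivity.
    * reflexivity.
    * apply (scalar_conv lam a us); [exact Below | intro n; apply solp_step | simpl; lra | simpl; lra].
  + intros delta Hd. set (e := Rmin delta us / 2).
    assert (He: 0 < e /\ e < delta /\ e < us).
    { unfold e. pose proof (Rmin_l delta us). pose proof (Rmin_r delta us).
      pose proof (Rmin_pos delta us Hd Hus). lra. }
    exists (us - e), 0. split; [lra|split; [lra|split]].
    { replace ((us - e - us) ^ 2 + (0 - 0) ^ 2) with (e*e) by ring. apply sqrt_sq_lt; lra. }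
    exists (fun n => fst (solp (fA lam a) (us - e) 0 n)). split; [|split; [|split]].
    * intro n. apply solp_step.
    * reflexivity.
    * reflexivity.
    * apply (scalar_conv lam a us); [exact Below | intro n; apply solp_step | simpl; lra | simpl; lra].
Qed.
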